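(* For each integer $r\ge 1$, let $G_r=(r+1)K_2 \nabla (r+1)K_2$, of order $4r+4$. Then $LE(G_r)=LE(K_{4r+4})=8r+6$ (so $G_r$ is $L$-borderenergetic), and $G_r$ and $K_{4r+4}$ have different Laplacian spectra.
   Context: All graphs are finite, simple and undirected. The Laplacian matrix of $G$ is $L(G)=D-A$ ($D$ degree matrix, $A$ adjacency matrix). For a graph $G$ on $n$ vertices with Laplacian eigenvalues $\mu_1,\dots,\mu_n$ and average degree $\overline d = 2|E(G)|/n$, the Laplacian energy is $LE(G)=\sum_{i=1}^n|\mu_i-\overline d|$. One has $LE(K_n)=2n-2$. A graph $G$ on $n$ vertices is $L$-borderenergetic if $LE(G)=LE(K_n)$. $K_m$ is the complete graph on $m$ vertices, $mG$ is the disjoint union of $m$ copies of $G$, and the join $G_1\nabla G_2$ is obtained from the disjoint union of $G_1$ and $G_2$ by adding all edges between a vertex of $G_1$ and a vertex of $G_2$. *)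

(* Defs.v *)
From HB Require Import structures.
From mathcomp Require Import all_boot all_order all_algebra all_field.
Set Implicit Arguments. Unset Strict Implicit. Unset Printing Implicit Defensive.
Import Order.TTheory GRing.Theory Num.Theory.
Local Open Scope ring_scope.

Definition simple_graph n (e : rel 'I_n) : Prop :=
  (forall i, ~~ e i i) /\ (forall i j, e i j = e j i).

Definition deg n (e : rel 'I_n) (i : 'I_n) : nat := #|[pred k | e i k]|.

Definition laplacian n (e : rel 'I_n) : 'M[algC]_n :=
  \matrix_(i, j) ((if i == j then (deg e i)%:R else 0) - (e i j)%:R).

(* Laplacian spectrum: the multiset (as a seq, order irrelevant) of roots of
   the characteristic polynomial of L, counted with multiplicity. *)
Definition lspec n (e : rel 'I_n) : seq algC :=
  sval (closed_field_poly_normal (char_poly (laplacian e))).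

Definition nedges n (e : rel 'I_n) : nat := #|[set p : 'I_n * 'I_n | e p.1 p.2 && (p.1 < p.2)%N]|.
Definition avgdeg n (e : rel 'I_n) : algC := (2 * nedges e)%:R / n%:R.

Definition LE n (e : rel 'I_n) : algC := \sum_(mu <- lspec e) `|mu - avgdeg e|.

Definition complete n : rel 'I_n := fun i j => i != j.

(* m K_2 on vertices 'I_(2*m): copy k is {2k, 2k+1} *)
Definition mK2 (m : nat) : rel 'I_(2 * m)%N := fun i j => (i != j) && (i./2 == j./2)%N.

Arguments mK2 : clear implicits.

(* join G1 \nabla G2 on 'I_(m+n): first m vertices carry G1, last n carry G2 *)
Definition gjoin m n (e1 : rel 'I_m) (e2 : rel 'I_n) : rel 'I_(m + n) :=
  fun i j => match split i, split j with
             | inl a, inl b => e1 a b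
             | inr a, inr b => e2 a b
             | _, _ => true
             end.

Definition Gr (r : nat) : rel 'I_(2 * r.+1 + 2 * r.+1)%N := gjoin (mK2 r.+1) (mK2 r.+1).
Arguments Gr : clear implicits.
Arguments complete : clear implicits.

(* Main.v *)
Require Import Defs.
From HB Require Import structures.
From mathcomp Require Import all_boot all_order all_algebra all_field.
From mathcomp Require Import ring lra zify.
Import Order.TTheory GRing.Theory Num.Theory.
Local Open Scope ring_scope.

Lemma char_poly_conj n (V A : 'M[algC]_n) : V \in unitmx ->
  char_poly (conjmx V A) = char_poly A.
Proof.
move=> Vu; rewrite conjumx // /char_poly /char_poly_mx.
have -> : 'X%:M - map_mx polyC (V *m A *m invmx V) =
   map_mx polyC V *m ('X%:M - map_mx polyC A) *m map_mx polyC (invmx V).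
  have VV : map_mx (@polyC _) V *m map_mx (@polyC _) (invmx V) = 1%:M.
    by rewrite -map_mxM mulmxV // map_mx1.
  by rewrite !map_mxM mulmxBr mulmxBl mul_mx_scalar -scalemxAl VV scalemx1.
rewrite !det_mulmx !det_map_mx mulrC mulrA -rmorphM -det_mulmx mulVmx //.
by rewrite det1 rmorph1 mul1r.
Qed.

Lemma lspec_conj n (e : rel 'I_n) (V : 'M[algC]_n) : V \in unitmx ->
  is_trig_mx (conjmx V (laplacian e)) ->
  perm_eq (lspec e) [seq (conjmx V (laplacian e)) i i | i <- enum 'I_n].
Proof.
move=> Vu Tt; rewrite /lspec; case: closed_field_poly_normal => s /= Hs.
apply: prod_XsubC_eq; rewrite big_map big_enum /=.
rewrite -char_poly_trig // char_poly_conj // [RHS]Hs.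
by rewrite (monicP (char_poly_monic _)) scale1r.
Qed.
Arguments lspec_conj {n e V}.
Arguments char_poly_conj {n V A}.


Definition pt (k : nat) : nat := if odd k then k.-1 else k.+1.

Lemma half_spec k : k = (odd k + k./2.*2)%N.
Proof. by rewrite odd_double_half. Qed.

Lemma pt_half k : ((pt k)./2 = k./2)%N.
Proof.
rewrite /pt; have := half_spec k; case: (odd k) => /= Hk; rewrite -?divn2 -?muln2 in Hk *; lia.
Qed.

Lemma pt_odd k : odd (pt k) = ~~ odd k.
Proof.
rewrite /pt; case E: (odd k) => /=; last by rewrite E.
have kp : (0 < k)%N by case: k E.
by move: E; rewrite -(prednK kp) /=; case: (odd k.-1).
Qed.

Lemma pt_eq j k : ((j != k) && (j./2 == k./2))%N = (j == pt k).
Proof.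
have Hj := half_spec j; have Hk := half_spec k.
apply/idP/idP.
  case/andP=> /eqP ne /eqP h; apply/eqP; rewrite /pt.
  move: Hj Hk ne; rewrite h; case: (odd j); case: (odd k) => /=; lia.
move/eqP=> ->; rewrite pt_half eqxx andbT; rewrite /pt.
case: (odd k) Hk => /= Hk; lia.
Qed.

Lemma ptK k : pt (pt k) = k.
Proof.
apply/esym/eqP; rewrite -pt_eq pt_half eqxx andbT.
by apply/negP => /eqP h; move: (pt_odd k); rewrite -h; case: (odd k).
Qed.

Lemma pt_lt {r} (i : 'I_(2 * r.+1 + 2 * r.+1)) : (pt i < 2 * r.+1 + 2 * r.+1)%N.
Proof.
have Hi := half_spec i; have := ltn_ord i; rewrite /pt.
case: (odd i) Hi => /= Hi; rewrite -?divn2 -?muln2 in Hi *; lia.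
Qed.

Definition sw {r} (i : 'I_(2 * r.+1 + 2 * r.+1)) : 'I_(2 * r.+1 + 2 * r.+1) :=
  Ordinal (pt_lt i).
Definition side {r} (i : 'I_(2 * r.+1 + 2 * r.+1)) : bool := (i < 2 * r.+1)%N.

Lemma swK r : involutive (@sw r).
Proof. by move=> i; apply/val_inj; rewrite /= ptK. Qed.

Lemma sw_neq r (i : 'I_(2 * r.+1 + 2 * r.+1)) : (sw i == i) = false.
Proof.
apply/negbTE/negP=> /eqP/(congr1 val) /= h.
by move: (pt_odd i); rewrite h; case: (odd i).
Qed.

Lemma side_sw r (i : 'I_(2 * r.+1 + 2 * r.+1)) : side (sw i) = side i.
Proof.
rewrite /side /=; have Hi := half_spec i; have Hp := half_spec (pt i).
have Hh := pt_half i.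
rewrite -!divn2 -!muln2 in Hi Hp Hh.
case: (odd i) Hi; case: (odd (pt i)) Hp => /= Hp Hi; apply/idP/idP; lia.
Qed.

Lemma Gr_E r (i j : 'I_(2 * r.+1 + 2 * r.+1)) :
  Gr r i j = (side i != side j) || (j == sw i).
Proof.
rewrite /Gr /gjoin /mK2 /side -val_eqE /= -pt_eq.
have Hi := half_spec i; have Hj := half_spec j.
case: splitP => a Ha; case: splitP => b Hb; rewrite -?val_eqE /=;
  rewrite -?divn2 -?muln2 in Hi Hj *;
  move: (ltn_ord a) (ltn_ord b); rewrite ?Ha ?Hb => la lb.
all: apply/idP/idP; lia.
Qed.

Lemma GrR r (i j : 'I_(2 * r.+1 + 2 * r.+1)) :
  (Gr r i j)%:R = 1 - (side i == side j)%:R + (j == sw i)%:R :> algC.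
Proof.
rewrite Gr_E; case Hs: (side i == side j); case Hj: (j == sw i) => /=.
- by rewrite subrr add0r.
- by rewrite subrr addr0.
- by move: Hs; rewrite (eqP Hj) side_sw eqxx.
- by rewrite subr0 addr0.
Qed.

Lemma sum_side r (c : bool) :
  \sum_(k : 'I_(2 * r.+1 + 2 * r.+1)) (side k == c)%:R = (2 * r.+1)%:R :> algC.
Proof.
rewrite big_split_ord /=.
have L k : side (lshift (2 * r.+1) k) = true by rewrite /side /= ltn_ord.
have R k : side (rshift (2 * r.+1) k) = false.
  by rewrite /side /= -ltn_subRL subnn ltn0.
under eq_bigr do rewrite L.
under [X in _ + X]eq_bigr do rewrite R.
case: c => /=.
  by rewrite [X in _ + X]big1 // addr0 sumr_const card_ord.
by rewrite [X in X + _]big1 // add0r sumr_const card_ord.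
Qed.

Lemma sum_pick {n} (a : 'I_n) (F : 'I_n -> algC) :
  \sum_k (k == a)%:R * F k = F a.
Proof.
rewrite (bigD1 a) //= eqxx mul1r big1 ?addr0 // => k /negbTE ->.
by rewrite mul0r.
Qed.

Lemma sum_pick1 {n} (a : 'I_n) : \sum_k (k == a)%:R = 1 :> algC.
Proof.
rewrite -[RHS](sum_pick a (fun _ => 1)); by apply: eq_bigr => k _; rewrite mulr1.
Qed.

Lemma deg_Gr r (i : 'I_(2 * r.+1 + 2 * r.+1)) : (deg (Gr r) i)%:R = (2 * r.+1).+1%:R :> algC.
Proof.
rewrite /deg -sum1_card natr_sum big_mkcond /=.
have E k : (if k \in [pred k | Gr r i k] then 1 else 0 : algC) = (Gr r i k)%:R.
  by rewrite inE /=; case: (Gr r i k).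
under eq_bigr => k _ do rewrite E GrR.
rewrite !big_split /= sumrN sumr_const card_ord.
have S : \sum_(k < 2 * r.+1 + 2 * r.+1) (1 *+ (side i == side k) : algC) = (2 * r.+1)%:R.
  by rewrite -(sum_side r (side i)); apply: eq_bigr => k _; rewrite eq_sym.
rewrite S.
rewrite sum_pick1.
by rewrite natrD addrK -[(2 * r.+1).+1]addn1 natrD.
Qed.

Definition Jm r : 'M[algC]_(2 * r.+1 + 2 * r.+1) := const_mx 1.
Definition Bm r : 'M[algC]_(2 * r.+1 + 2 * r.+1) :=
  \matrix_(i, j) (side i == side j)%:R.
Definition Pm r : 'M[algC]_(2 * r.+1 + 2 * r.+1) :=
  \matrix_(i, j) (j == sw i)%:R.

Lemma lapG r : laplacian (Gr r) = (2 * r.+1).+1%:R%:M - (Jm r - Bm r + Pm r).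
Proof.
apply/matrixP => i j; rewrite !mxE deg_Gr GrR.
by case: (i == j); rewrite ?mulr1n ?mulr0n.
Qed.

Lemma PmM r (X : 'M[algC]_(2 * r.+1 + 2 * r.+1)) i j : (Pm r *m X) i j = X (sw i) j.
Proof.
rewrite mxE -[RHS](sum_pick (sw i) (fun k => X k j)).
by apply: eq_bigr => k _; rewrite mxE.
Qed.

Lemma MPm r (X : 'M[algC]_(2 * r.+1 + 2 * r.+1)) i j : (X *m Pm r) i j = X i (sw j).
Proof.
rewrite mxE -[RHS](sum_pick (sw j) (fun k => X i k)).
apply: eq_bigr => k _; rewrite mxE mulrC.
by rewrite eq_sym (can2_eq (@swK r) (@swK r)).
Qed.

Lemma PP r : Pm r *m Pm r = 1%:M.
Proof.
apply/matrixP => i j; rewrite PmM !mxE swK.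
by rewrite eq_sym.
Qed.

Lemma PJ r : Pm r *m Jm r = Jm r.
Proof. by apply/matrixP => i j; rewrite PmM !mxE. Qed.
Lemma JP r : Jm r *m Pm r = Jm r.
Proof. by apply/matrixP => i j; rewrite MPm !mxE. Qed.
Lemma PB r : Pm r *m Bm r = Bm r.
Proof. by apply/matrixP => i j; rewrite PmM !mxE side_sw. Qed.
Lemma BP r : Bm r *m Pm r = Bm r.
Proof. by apply/matrixP => i j; rewrite MPm !mxE side_sw. Qed.

Lemma JB r : Jm r *m Bm r = (2 * r.+1)%:R *: Jm r.
Proof.
apply/matrixP => i j; rewrite !mxE mulr1 -(sum_side r (side j)).
by apply: eq_bigr => k _; rewrite !mxE mul1r.
Qed.
Lemma BJ r : Bm r *m Jm r = (2 * r.+1)%:R *: Jm r.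
Proof.
apply/matrixP => i j; rewrite !mxE mulr1 -(sum_side r (side i)).
by apply: eq_bigr => k _; rewrite !mxE mulr1 eq_sym.
Qed.
Lemma JJ r : Jm r *m Jm r = (2 * r.+1 + 2 * r.+1)%:R *: Jm r.
Proof.
apply/matrixP => i j; rewrite !mxE mulr1.
under eq_bigr do rewrite !mxE mulr1.
by rewrite sumr_const card_ord.
Qed.
Lemma BB r : Bm r *m Bm r = (2 * r.+1)%:R *: Bm r.
Proof.
apply/matrixP => i j; rewrite !mxE -(sum_side r (side i)) mulr_suml.
apply: eq_bigr => k _; rewrite !mxE.
case: (side i) (side j) (side k) => [] [] [] /=; by rewrite ?(mulr1, mulr0, mul1r, mul0r).
Qed.


Lemma card_sum (T : finType) (P : pred T) : #|[pred x | P x]| = (\sum_x P x)%N.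
Proof.
rewrite -sum1_card big_mkcond /=; apply: eq_bigr => x _; rewrite inE.
by case: (P x).
Qed.

Lemma nedges_deg m (e : rel 'I_m) : simple_graph e ->
  (2 * nedges e = \sum_i deg e i)%N.
Proof.
case=> irr sym; rewrite /nedges /deg.
have -> : #|[set p : 'I_m * 'I_m | e p.1 p.2 && (p.1 < p.2)%N]| =
   (\sum_i \sum_j (e i j && (i < j)%N))%N.
  rewrite pair_big /= -(@card_sum _ (fun p : 'I_m * 'I_m => e p.1 p.2 && (p.1 < p.2)%N)).
  apply: eq_card => p; by rewrite !inE.
under [RHS]eq_bigr do rewrite (@card_sum _ (fun k => e _ k)).
have H i j : (e i j = (e i j && (i < j)%N) + (e j i && (j < i)%N) :> nat)%N.
  rewrite (sym j i); case E: (e i j) => //=.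
  case: (ltngtP i j) => // /val_inj h; by move: (irr i); rewrite {2}h E.
under [RHS]eq_bigr do under eq_bigr do rewrite H.
under [RHS]eq_bigr do rewrite big_split.
rewrite big_split /= [X in (_ + X)%N]exchange_big /=; lia.
Qed.

Lemma avgdeg_reg m (e : rel 'I_m) d : simple_graph e -> (0 < m)%N ->
  (forall i, deg e i = d) -> avgdeg e = d%:R.
Proof.
move=> sg m0 hd; rewrite /avgdeg nedges_deg //.
under eq_bigr do rewrite hd.
rewrite sum_nat_const card_ord natrM mulrC mulKf //.
by rewrite pnatr_eq0 -lt0n.
Qed.

Lemma deg_complete m (i : 'I_m) : deg (complete m) i = m.-1.
Proof.
rewrite /deg -[in RHS](card_ord m) -(cardC1 i); apply: eq_card => k.
by rewrite !inE /complete eq_sym.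
Qed.

Lemma simple_complete m : simple_graph (complete m).
Proof. by split=> [i|i j]; rewrite /complete ?eqxx // eq_sym. Qed.

Lemma lapK m : (0 < m)%N -> laplacian (complete m) = m%:R%:M - const_mx 1.
Proof.
move=> m0; apply/matrixP => i j; rewrite !mxE deg_complete /complete.
case: eqP => _ /=; last by rewrite mulr0n.
by rewrite mulr1n subr0 -subn1 natrB.
Qed.


Lemma conjM n (V X Y : 'M[algC]_n) : V \in unitmx ->
  conjmx V (X *m Y) = conjmx V X *m conjmx V Y.
Proof.
move=> Vu; rewrite !conjumx //.
by rewrite !mulmxA mulmxKV.
Qed.

Lemma conjB n (V X Y : 'M[algC]_n) :
  conjmx V (X - Y) = conjmx V X - conjmx V Y.
Proof. by rewrite /conjmx mulmxBr mulmxBl. Qed.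

Lemma conjD n (V X Y : 'M[algC]_n) :
  conjmx V (X + Y) = conjmx V X + conjmx V Y.
Proof. by rewrite /conjmx mulmxDr mulmxDl. Qed.

Lemma conjZ n (V X : 'M[algC]_n) a :
  conjmx V (a *: X) = a *: conjmx V X.
Proof. by rewrite /conjmx -scalemxAr -scalemxAl. Qed.

Lemma conjS n (V : 'M[algC]_n) a : V \in unitmx -> conjmx V a%:M = a%:M.
Proof. by move=> Vu; rewrite conjmx_scalar // row_free_unit. Qed.

Lemma conj_tr n (V X : 'M[algC]_n) : V \in unitmx -> \tr (conjmx V X) = \tr X.
Proof. by move=> Vu; rewrite conjumx // mxtrace_mulC mulmxA mulVmx // mul1mx. Qed.

Lemma trig_diagM n (A B : 'M[algC]_n) i : is_trig_mx A -> is_trig_mx B ->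
  (A *m B) i i = A i i * B i i.
Proof.
move=> /is_trig_mxP tA /is_trig_mxP tB; rewrite mxE (bigD1 i) //= big1 ?addr0 //.
move=> k /negbTE nk; case: (ltngtP i k) => [lt|lt|/val_inj e].
- by rewrite tA // mul0r.
- by rewrite tB // mulr0.
- by rewrite e eqxx in nk.
Qed.
Arguments conjM {n V X Y}.
Arguments conj_tr {n V X}.
Arguments conjS {n V}.
Arguments trig_diagM {n A B}.


Lemma sq_cases {x c : algC} : x * x = c * x -> x = 0 \/ x = c.
Proof.
move=> h; have : (x - c) * x = 0 by rewrite mulrBl h subrr.
by move/eqP; rewrite mulf_eq0 subr_eq0 => /orP[] /eqP ->; [right|left].
Qed.

Lemma idx_G (N : nat) (p j b : algC) : (2 <= N)%N -> p * p = 1 ->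
  j * j = (N + N)%:R * j -> b * b = N%:R * b -> p * j = j -> p * b = b ->
  j * b = N%:R * j ->
  `|- j + b - p| = 1 + 2 / (N + N)%:R * j + (N%:R - 2) / N%:R * b.
Proof.
move=> N2 hp hj hb hpj hpb hjb.
have N0 : N%:R != 0 :> algC by rewrite pnatr_eq0; lia.
have NN0 : (N + N)%:R != 0 :> algC by rewrite pnatr_eq0; lia.
have hp' : p = 1 \/ p = -1.
  have : (p - 1) * (p + 1) = 0.
    have e : (p - 1) * (p + 1) = p * p - 1 by ring.
    by rewrite e hp subrr.
  by move/eqP; rewrite mulf_eq0 subr_eq0 addr_eq0 => /orP[] /eqP ->; [left|right].
case: (sq_cases hj) => ej.
- case: (sq_cases hb) => eb.
  + rewrite ej eb !mulr0 !addr0 oppr0 add0r normrN.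
    by case: hp' => ->; rewrite ?normrN normr1.
  + rewrite eb in hpb; have p1 : p = 1.
      by apply: (mulIf N0); rewrite hpb mul1r.
    rewrite ej eb p1 mulr0 addr0 oppr0 add0r divfK // ger0_norm.
      by rewrite addrC; ring.
    by rewrite subr_ge0 (ler_nat _ 1 N); lia.
- have eb : b = N%:R.
    apply: (mulfI NN0); rewrite -ej hjb ej mulrC.
    by [].
  have p1 : p = 1 by apply: (mulIf NN0); rewrite -ej hpj mul1r.
  rewrite ej eb p1 !divfK //.
  have -> : - (N + N)%:R + N%:R - 1 = - (N%:R + 1) :> algC.
    by rewrite natrD; ring.
  rewrite normrN ger0_norm; last by rewrite natr1 ler0n.
  ring.
Qed.

Lemma idx_K (m : nat) (j : algC) : (1 <= m)%N -> j * j = m%:R * j ->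
  `|1 - j| = 1 + (m%:R - 2) / m%:R * j.
Proof.
move=> m1 hj; have m0 : m%:R != 0 :> algC by rewrite pnatr_eq0; lia.
case: (sq_cases hj) => ->; first by rewrite subr0 mulr0 addr0 normr1.
rewrite divfK // distrC ger0_norm; first ring.
by rewrite subr_ge0 (ler_nat _ 1 m).
Qed.


Lemma LE_conj n (e : rel 'I_n) (V : 'M[algC]_n) : V \in unitmx ->
  is_trig_mx (conjmx V (laplacian e)) ->
  LE e = \sum_i `|conjmx V (laplacian e) i i - avgdeg e|.
Proof.
move=> Vu tT; rewrite /LE (perm_big _ (lspec_conj Vu tT)) /=.
by rewrite big_map big_enum.
Qed.
Arguments LE_conj {n e V}.

Lemma lspec_sum n (e : rel 'I_n) : (0 < n)%N ->
  \sum_(mu <- lspec e) mu = \tr (laplacian e).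
Proof.
move=> n0; have [V Vu tT] := Schur (laplacian e) n0.
have Vu' := unitarymx_unit Vu.
rewrite (perm_big _ (lspec_conj Vu' tT)) /= big_map big_enum /=.
by rewrite -(conj_tr Vu').
Qed.

Lemma tr_lap n (e : rel 'I_n) : simple_graph e ->
  \tr (laplacian e) = \sum_i (deg e i)%:R.
Proof.
case=> irr _; apply: eq_bigr => i _; rewrite mxE eqxx.
by rewrite (negbTE (irr i)) subr0.
Qed.

Lemma entry_sub n (a : algC) (X : 'M[algC]_n) i j :
  (a%:M - X) i j = a *+ (i == j) - X i j.
Proof. by rewrite !mxE. Qed.

Lemma entry_sub3 n (a : algC) (X Y Z : 'M[algC]_n) i j :
  (a%:M - (X - Y + Z)) i j = a *+ (i == j) - (X i j - Y i j + Z i j).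
Proof. by rewrite !mxE. Qed.

Lemma LE_K m : (2 <= m)%N -> LE (complete m) = (2 * m - 2)%:R.
Proof.
move=> m2; have m1 : (0 < m)%N by lia.
pose J : 'M[algC]_m := const_mx 1.
have [|V Vu /allP HT] := @cotrigonalization _ m [:: J].
  by move=> A B; rewrite !inE => /eqP -> /eqP ->.
have Vu' := unitarymx_unit Vu.
have tJ' : is_trig_mx (conjmx V J) by apply: (HT J); rewrite inE.
have L : conjmx V (laplacian (complete m)) = m%:R%:M - conjmx V J.
  by rewrite lapK // conjB conjS.
have tL : is_trig_mx (conjmx V (laplacian (complete m))).
  have /is_trig_mxP tJ2 := tJ'.
  rewrite L; apply/is_trig_mxP => i j lt; rewrite entry_sub tJ2 //.
  by rewrite -val_eqE /= (ltn_eqF lt) mulr0n subr0.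
have ad : avgdeg (complete m) = m%:R - 1.
  rewrite (@avgdeg_reg _ _ m.-1 (simple_complete m) m1 (@deg_complete m)).
  by rewrite -subn1 natrB.
have JJ : J *m J = m%:R *: J.
  apply/matrixP => i j; rewrite !mxE mulr1.
  under eq_bigr do rewrite !mxE mulr1.
  by rewrite sumr_const card_ord.
rewrite (LE_conj Vu' tL).
have E i : `|conjmx V (laplacian (complete m)) i i - avgdeg (complete m)|
    = 1 + (m%:R - 2) / m%:R * conjmx V J i i.
  rewrite -idx_K //; last first.
    by rewrite -trig_diagM // -conjM // JJ conjZ mxE.
  rewrite L ad entry_sub eqxx mulr1n; congr `|_|; ring.
under eq_bigr do rewrite E.
rewrite big_split /= -mulr_sumr sumr_const card_ord.
have -> : \sum_i conjmx V J i i = \tr (conjmx V J) by [].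
rewrite conj_tr // /mxtrace.
under eq_bigr do rewrite mxE.
rewrite sumr_const card_ord divfK; last by rewrite pnatr_eq0; lia.
have -> : (2 * m - 2 = m + (m - 2))%N by lia.
by rewrite natrD natrB.
Qed.


Lemma simple_Gr r : simple_graph (Gr r).
Proof.
split=> [i|i j]; rewrite !Gr_E.
  by rewrite eqxx /= eq_sym sw_neq.
rewrite [side j == _]eq_sym; congr (_ || _).
by rewrite eq_sym (can2_eq (@swK r) (@swK r)).
Qed.

Lemma deg_Gr_nat r i : deg (Gr r) i = (2 * r.+1).+1.
Proof. by apply/eqP; rewrite -(eqr_nat algC) deg_Gr. Qed.

Lemma LE_G r : (1 <= r)%N -> LE (Gr r) = (8 * r + 6)%:R.
Proof.
move=> r1.
set n := (2 * r.+1 + 2 * r.+1)%N.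
set N := (2 * r.+1)%N.
have [|V Vu /allP HT] := @cotrigonalization _ n [:: Pm r; Jm r; Bm r].
  move=> A B; rewrite !inE => /or3P[] /eqP -> /or3P[] /eqP ->;
  rewrite /comm_mx ?PJ ?JP ?PB ?BP ?JB ?BJ //.
have Vu' := unitarymx_unit Vu.
have tP : is_trig_mx (conjmx V (Pm r)) by apply: (HT (Pm r)); rewrite !inE eqxx.
have tJ : is_trig_mx (conjmx V (Jm r)) by apply: (HT (Jm r)); rewrite !inE eqxx ?orbT.
have tB : is_trig_mx (conjmx V (Bm r)) by apply: (HT (Bm r)); rewrite !inE eqxx ?orbT.
have L : conjmx V (laplacian (Gr r)) =
   N.+1%:R%:M - (conjmx V (Jm r) - conjmx V (Bm r) + conjmx V (Pm r)).
  by rewrite lapG conjB conjS // conjD conjB.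
have tL : is_trig_mx (conjmx V (laplacian (Gr r))).
  have /is_trig_mxP tP2 := tP; have /is_trig_mxP tJ2 := tJ; have /is_trig_mxP tB2 := tB.
  rewrite L; apply/is_trig_mxP => i j lt; rewrite entry_sub3 tJ2 // tB2 // tP2 //.
  by rewrite -val_eqE /= (ltn_eqF lt) mulr0n subrr addr0 subr0.
have ad : avgdeg (Gr r) = N.+1%:R.
  by rewrite (@avgdeg_reg _ _ N.+1 (simple_Gr r) _ (@deg_Gr_nat r)).
rewrite (LE_conj Vu' tL).
have E i : `|conjmx V (laplacian (Gr r)) i i - avgdeg (Gr r)|
    = 1 + 2 / (N + N)%:R * conjmx V (Jm r) i i
        + (N%:R - 2) / N%:R * conjmx V (Bm r) i i.
  rewrite -(@idx_G N (conjmx V (Pm r) i i)) //; first last.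
  - by rewrite -trig_diagM // -conjM // JB conjZ mxE.
  - by rewrite -trig_diagM // -conjM // PB.
  - by rewrite -trig_diagM // -conjM // PJ.
  - by rewrite -trig_diagM // -conjM // BB conjZ mxE.
  - by rewrite -trig_diagM // -conjM // JJ conjZ mxE.
  - by rewrite -trig_diagM // -conjM // PP conjS // mxE eqxx.
  - rewrite /N; lia.
  rewrite L ad entry_sub3 eqxx mulr1n; congr `|_|; ring.
under eq_bigr do rewrite E.
rewrite !big_split /= -!mulr_sumr sumr_const card_ord.
have -> : \sum_i conjmx V (Jm r) i i = \tr (conjmx V (Jm r)) by [].
have -> : \sum_i conjmx V (Bm r) i i = \tr (conjmx V (Bm r)) by [].
rewrite !conj_tr // /mxtrace.
under eq_bigr do rewrite mxE.
under [X in _ + _ + _ * X]eq_bigr do rewrite mxE eqxx.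
rewrite !sumr_const card_ord.
have x0 : N%:R != 0 :> algC by rewrite pnatr_eq0 /N; lia.
have -> : (8 * r + 6)%:R = (N + N)%:R + (N + N)%:R - 2 :> algC.
  apply/eqP; rewrite eq_sym subr_eq -!natrD eqr_nat /N; apply/eqP; lia.
rewrite /n !natrD; field.
by rewrite x0 -natrD pnatr_eq0 /N; lia.
Qed.


Theorem theorem3 (r : nat) (hr : (1 <= r)%N) :
  (2 * r.+1 + 2 * r.+1 = 4 * r + 4)%N /\
  simple_graph (Gr r) /\
  LE (Gr r) = LE (complete (2 * r.+1 + 2 * r.+1)%N) /\
  LE (Gr r) = (8 * r + 6)%:R /\
  ~~ perm_eq (lspec (Gr r)) (lspec (complete (2 * r.+1 + 2 * r.+1)%N)).
Proof.
have hG := LE_G r hr.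
have hK : LE (complete (2 * r.+1 + 2 * r.+1)%N) = (8 * r + 6)%:R.
  rewrite LE_K; last lia.
  congr (_%:R); lia.
split; first lia.
split; first exact: simple_Gr.
split; first by rewrite hG hK.
split; first done.
apply/negP => hp.
have S : \sum_(mu <- lspec (Gr r)) mu =
         \sum_(mu <- lspec (complete (2 * r.+1 + 2 * r.+1)%N)) mu.
  by apply: perm_big.
rewrite !lspec_sum in S; try lia.
rewrite (tr_lap _ _ (simple_Gr r)) (tr_lap _ _ (simple_complete _)) in S.
have E1 : \sum_(i < 2 * r.+1 + 2 * r.+1) ((deg (Gr r) i)%:R : algC) =
  \sum_(i < 2 * r.+1 + 2 * r.+1) (((2 * r.+1).+1)%:R : algC).
  by apply: eq_bigr => i _; rewrite deg_Gr_nat.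
have E2 : \sum_(i < 2 * r.+1 + 2 * r.+1) ((deg (complete _) i)%:R : algC) =
  \sum_(i < 2 * r.+1 + 2 * r.+1) (((2 * r.+1 + 2 * r.+1).-1)%:R : algC).
  by apply: eq_bigr => i _; rewrite deg_complete.
rewrite E1 E2 in S.
move: S; rewrite !sumr_const card_ord -!mulrnA => /eqP.
rewrite eqr_nat => /eqP; lia.
Qed.
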